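(* Let $q$ be a prime power, let $k < q$ and $t \geq 1$ be integers, and let $C(X) \in \mathbb{F}_q[X]$ be a nonzero polynomial of the form $$C(X) = \sum_{i=0}^{t-1} C_i(X)\Lambda^i(X),$$ where $\Lambda(X) = X^q - X$ and $\deg(C_i) \leq k$ for all $i$. Let $H(X) \in \mathbb{F}_q[X]$ be irreducible, and let $\mu$ be the largest integer such that $H(X)^\mu$ divides $C(X)$. Then $\mu \bmod q \in [0, k+t-1]$. *)

(* Defs.v *)
From HB Require Import structures.
From mathcomp Require Import all_boot all_order all_algebra all_field.
Set Implicit Arguments. Unset Strict Implicit. Unset Printing Implicit Defensive.
Import GRing.Theory.
Local Open Scope ring_scope.

Definition Lambda (F : fieldType) (q : nat) : {poly F} := 'X^q - 'X.

(* Main.v *)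
Require Import Defs.
From HB Require Import structures.
From mathcomp Require Import all_boot all_order all_algebra all_field.
Import GRing.Theory.
Local Open Scope ring_scope.
From mathcomp Require Import zify.
Set Implicit Arguments. Unset Strict Implicit. Unset Printing Implicit Defensive.

Lemma card_pow (F : finFieldType) :
  {p : nat & {n : nat | [/\ prime p, p \in [pchar F], #|F| = (p ^ n)%N & (0 < n)%N]}}.
Proof.
have [p pr_p chp] := finPcharP F.
exists p; exists (logn p #|F|).
have E : #|F| = (p ^ logn p #|F|)%N.
  by have := card_pprimeChar chp.
split=> //.
case: (logn p #|F|) E => // E.
have := finNzRing_gt1 F; by rewrite E.
Qed.

Lemma frobq (F : finFieldType) (x y : {poly F}) :
  (x + y) ^+ #|F| = x ^+ #|F| + y ^+ #|F|.
Proof.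
have [p [n [pr chp -> _]]] := card_pow F.
apply: exprDn_pchar.
by rewrite pnatX (pnatE _ pr) pchar_poly chp.

Qed.

Lemma coefX1 (R : comNzRingType) m j : ((('X + 1 : {poly R}) ^+ m)`_j) = ('C(m, j))%:R.
Proof.
rewrite exprD1n coef_sum.
under eq_bigr => i _ do rewrite coefMn coefXn.
case: (ltnP j m.+1) => hj.
  rewrite (bigD1 (Ordinal hj)) //= eqxx big1 ?addr0 //.
  move=> i hi; rewrite (_ : (j == i) = false) ?mul0rn //; apply/negbTE.
  by apply: contra hi => /eqP h; apply/eqP/val_inj.
rewrite big1 ?bin_small //.
move=> i _; rewrite (_ : (j == i) = false) ?mul0rn //; apply/negbTE.
by apply/eqP=> h; move: hj; rewrite h leqNgt ltn_ord.
Qed.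

Lemma binq (F : finFieldType) n j : (j < #|F|)%N ->
  ('C((n + #|F|)%N, j))%:R = ('C(n, j))%:R :> F.
Proof.
move=> hj.
have := coefX1 F (n + #|F|)%N j.
rewrite exprD frobq expr1n mulrDr mulr1 coefD coefX1.
by rewrite coefMXn hj add0r => <-.
Qed.


Lemma binE (F : finFieldType) q (hq : #|F| = q) j a : (j < q)%N -> (q <= a)%N ->
  ('C(a, j))%:R = ('C((a - q)%N, j))%:R :> F.
Proof.
move=> hj ha; have := @binq F (a - q)%N j.
by rewrite hq (subnK ha) => H; exact: H hj.
Qed.

Lemma nderivn_mulXq (F : finFieldType) q (hq : #|F| = q) (B : {poly F}) j : (j < q)%N ->
  (B * 'X^q)^`N(j) = B^`N(j) * 'X^q.
Proof.
move=> hj.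
apply/polyP=> m.
rewrite coef_nderivn.
rewrite !coefMXn.
rewrite coef_nderivn.
case: (ltnP m q) => hm.
  case: (ltnP (j + m)%N q) => hjm.
    by rewrite mul0rn.
  have h : (j + m - q < j)%N by lia.
  rewrite -mulr_natr.
  rewrite (binE hq hj hjm).
  rewrite (bin_small h).
  by rewrite mulr_natr mulr0n.
have h1 : (j + m < q)%N = false by lia.
have h2 : (j + m - q = j + (m - q))%N by lia.
have h3 : (q <= j + m)%N by lia.
rewrite h1 -h2.
by rewrite -mulr_natr (binE hq hj h3) mulr_natr.
Qed.

Lemma hornerPX (R : comNzRingType) (g : {poly R}) : (g^:P).['X] = g.
Proof.
elim/poly_ind: g => [|g c IH]; first by rewrite rmorph0 horner0.
by rewrite rmorphD rmorphM /= map_polyX map_polyC hornerD hornerM hornerX hornerC IH.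
Qed.

Lemma nderivnM (R : comNzRingType) (f g : {poly R}) n :
  (f * g)^`N(n) = \sum_(i < n.+1) f^`N(i) * g^`N(n - i).
Proof.
pose E (f : {poly R}) := ((f^:P)^:P).[('X)%:P + 'X].
have key : forall f, E f = \poly_(i < size f) f^`N(i).
  move=> h; rewrite /E nderiv_taylor; last exact: mulrC.
  rewrite poly_def !size_map_polyC; apply: eq_bigr => i _.
  by rewrite !nderivn_map horner_map /= hornerPX mul_polyC.
have coefE : forall f i, (E f)`_i = f^`N(i).
  move=> h i; rewrite key coef_poly; case: ltnP => // hi.
  by rewrite nderivn_poly0.
have EM : E (f * g) = E f * E g by rewrite /E !rmorphM /= hornerM.
by rewrite -coefE EM coefM; apply: eq_bigr => i _; rewrite !coefE.
Qed.

Lemma nderivnCM (R : comNzRingType) (c : R) (V : {poly R}) r :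
  (c%:P * V)^`N(r) = c%:P * V^`N(r).
Proof. by rewrite !mul_polyC nderivnZ. Qed.

Lemma nderivn_frob (F : finFieldType) q (hq : #|F| = q) (f V : {poly F}) r : (r < q)%N ->
  (f ^+ q * V)^`N(r) = f ^+ q * V^`N(r).
Proof.
move=> hr; elim/poly_ind: f V => [|g c IH] V.
  have q0 : (0 < q)%N by case: q hr hq => //.
  rewrite expr0n eqn0Ngt q0 /= !mul0r.
  by apply: nderivn_poly0; rewrite size_poly0.
rewrite -hq frobq hq exprMn -polyC_exp.
have -> : c ^+ q = c by rewrite -hq expf_card.
rewrite !mulrDl nderivnD nderivnCM -mulrA IH [_ * V]mulrC.
by rewrite (nderivn_mulXq hq) // [V^`N(r) * _]mulrC mulrA.
Qed.

Lemma nderivn_Lambda (F : finFieldType) q (hq : #|F| = q) i : forall s (A : {poly F}) j,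
  (size A <= s)%N -> (s + i <= j)%N -> (j < q)%N -> (A * Lambda F q ^+ i)^`N(j) = 0.
Proof.
elim: i => [|i IH] s A j hA hj hq'.
  by rewrite expr0 mulr1 nderivn_poly0 //; apply: leq_trans hA _; rewrite -(addn0 s).
rewrite exprSr mulrA {2}/Lambda mulrBr nderivnB.
rewrite (nderivn_mulXq hq) // (IH s A j) //; last by rewrite (leq_trans _ hj) // leq_add2l.
rewrite mul0r -mulrA [_ * 'X]mulrC mulrA (IH s.+1 (A * 'X) j) ?subrr //.
  by case: (eqVneq A 0) => [->|nz]; rewrite ?mul0r ?size_poly0 // size_mulX.
by rewrite addSn -addnS.
Qed.

Lemma dvdp_sum_ord (F : fieldType) (H : {poly F}) n (G : 'I_n -> {poly F}) :
  (forall i, H %| G i) -> H %| \sum_(i < n) G i.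
Proof.
move=> hG; apply: (big_ind (fun x => H %| x)) => //.
by move=> x y; apply: dvdp_add.
Qed.

Lemma hasse_pow (F : fieldType) (H : {poly F}) m : forall U,
  (forall i, (i < m)%N -> H %| (H ^+ m * U)^`N(i)) /\
  H %| (H ^+ m * U)^`N(m) - (H^`()) ^+ m * U.
Proof.
elim: m => [|m IH] U.
  split; first by [].
  rewrite !expr0 !mul1r nderivn0 subrr; exact: dvdp0.
have E : H ^+ m.+1 * U = H * (H ^+ m * U) by rewrite exprS mulrA.
have [IH1 IH2] := IH U.
split.
  move=> i hi; rewrite E nderivnM; apply: dvdp_sum_ord => -[a ha] /=.
  case: a ha => [|a] ha; first by rewrite nderivn0 dvdp_mulr.
  by apply: dvdp_mull; apply: IH1; lia.
rewrite E nderivnM !big_ord_recl /= nderivn0 nderivn1 subn0 subSS subn0.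
rewrite -addrA dvdp_addr ?dvdp_mulIl // addrAC exprS -mulrA -mulrBr.
apply: dvdp_add; first exact: dvdp_mull.
apply: dvdp_sum_ord => -[a ha] /=; apply: dvdp_mull; apply: IH1.
rewrite /bump /=; lia.
Qed.

Lemma irr_deriv_neq0 (F : finFieldType) (H : {poly F}) :
  irreducible_poly H -> H^`() != 0.
Proof.
move=> irrH; apply/negP => /eqP dH0.
have [p [n [pr chp hq n0]]] := card_pow F.
have p0 : (0 < p)%N by apply: prime_gt0.
have cH : forall m, ~~ (p %| m)%N -> H`_m = 0.
  case=> [|m] hm; first by rewrite dvdn0 in hm.
  have := congr1 (fun P : {poly F} => P`_m) dH0; rewrite coef_deriv coef0 -mulr_natr => /eqP.
  rewrite mulf_eq0 => /orP [/eqP //|]; by rewrite -(dvdn_pcharf chp) (negbTE hm).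
pose rt (x : F) := x ^+ (p ^ n.-1).
have rtK : forall x, rt x ^+ p = x.
  move=> x; rewrite /rt -exprM -expnSr prednK // -hq; exact: expf_card.
pose G := \poly_(j < size H) rt (H`_(j * p)).
have chp' : p \in [pchar {poly F}] by rewrite pchar_poly.
have GH : G ^+ p = H.
  rewrite -(pFrobenius_autE chp') /G poly_def rmorph_sum /=.
  under eq_bigr => j _ do rewrite pFrobenius_autE exprZn rtK -exprM.
  apply/polyP=> m; rewrite coef_sumMXn.
  case: (boolP (p %| m)%N) => hm; last first.
    rewrite cH // big1 // => j /eqP hj; move: hm; by rewrite -hj dvdn_mull.
  case: (ltnP (m %/ p) (size H)) => hs.
    rewrite (big_pred1 (Ordinal hs)) /=; first by rewrite divnK.
    move=> j /=; apply/eqP/eqP => [hj|->]; last by rewrite divnK.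
    by apply: val_inj => /=; rewrite -hj mulnK.
  rewrite big1; last first.
    move=> j /eqP hj; have := ltn_ord j; move: hs; rewrite -hj mulnK // => a b.
    by rewrite leqNgt b in a.
  by symmetry; apply: nth_default; apply: leq_trans hs (leq_div _ _).
have H1 : (1 < size H)%N := irrH.1.
have p2 : (2 <= p)%N by apply: prime_gt1.
have hsz := size_exp G p; rewrite GH in hsz.
have Gn1 : size G != 1%N.
  by apply/eqP=> hG; move: hsz H1; rewrite hG /=; case: (size H) => [|[|]].
have hdiv : G %| H by rewrite -GH; apply: dvdp_exp (dvdpp G).
have := eqp_size (irrH G Gn1 hdiv).
move: hsz H1; case: (size H) => // sH; case: (size G) => // sG /= h1 h2 h3.
case: h3 => h3; subst sG; nia.
Qed.

Unset Implicit Arguments. Set Strict Implicit. Set Printing Implicit Defensive.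

Theorem lemma3p3 (F : finFieldType) (q k t : nat) (Cs : nat -> {poly F})
  (C H : {poly F}) (mu : nat) :
  #|F| = q -> (k < q)%N -> (1 <= t)%N ->
  (forall i, (i < t)%N -> (size (Cs i) <= k.+1)%N) ->
  C = \sum_(i < t) Cs i * Lambda F q ^+ i ->
  C != 0 ->
  irreducible_poly H ->
  H ^+ mu %| C -> ~~ (H ^+ mu.+1 %| C) ->
  (mu %% q <= k + t - 1)%N.
Proof.
move=> hF hk ht hCs hC C0 irrH hdiv hndiv.
rewrite leqNgt; apply/negP => hr.
have q0 : (0 < q)%N by apply: leq_ltn_trans hk.
set r := (mu %% q)%N in hr.
have hrq : (r < q)%N by rewrite ltn_pmod.
have D0 : C^`N(r) = 0.
  rewrite hC linear_sum /=; apply: big1 => -[i hi] _ /=.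
  apply: (nderivn_Lambda hF (s := k.+1)) => //; first exact: hCs.
  lia.
set U := C %/ H ^+ mu.
have CU : C = U * H ^+ mu by apply/eqP; rewrite -dvdp_eq.
have HU : ~~ (H %| U).
  apply: contra hndiv => hU; rewrite CU exprSr mulrC; exact: dvdp_mul.
have H0 : H != 0 := irredp_neq0 irrH.
have E : C = (H ^+ (mu %/ q)) ^+ q * (H ^+ r * U).
  by rewrite CU {1}(divn_eq mu q) exprD -exprM mulrC mulrA.
move: D0; rewrite E (nderivn_frob hF) // => /eqP; rewrite mulf_eq0 !expf_eq0 (negbTE H0) !andbF /= => /eqP D0.
have [_ h2] := hasse_pow H r U.
move: h2; rewrite D0 dvdp_subr ?dvdp0 // => h2.
have cop : coprimep H (H^`() ^+ r).
  apply: coprimep_expr; rewrite irreducible_poly_coprime //.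
  apply/negP => hd; have dH := irr_deriv_neq0 irrH.
  by have := dvdp_leq dH hd; rewrite leqNgt lt_size_deriv.
by move: h2; rewrite Gauss_dvdpr // (negbTE HU).
Qed.
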